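(* For every finite set $\textsc{prop}$ of propositional variables and every $\mathrm{PL}_{\{\oplus_3\}}[\textsc{prop}]$-formula $\phi$, every set of labeled examples that uniquely characterizes $\phi$ with respect to $\mathrm{PL}_{\{\oplus_3\}}[\textsc{prop}]$ contains at least $|\textsc{prop}|-1$ examples.
   Context: $\oplus_3$ is the ternary Boolean function $x\oplus y\oplus z$ (exclusive or). $\mathrm{PL}_{\{\oplus_3\}}[\textsc{prop}]$ is the set of formulas generated by $\phi::=x\mid\oplus_3(\phi_1,\phi_2,\phi_3)$ with $x\in\textsc{prop}$, evaluated under truth assignments $V:\textsc{prop}\to\{0,1\}$ in the obvious way; two formulas are equivalent if they agree under all such assignments. A labeled example is a pair $(V,\mathrm{lab})$ with $\mathrm{lab}\in\{0,1\}$; $\phi$ fits it if $\phi$ evaluates to $\mathrm{lab}$ under $V$. A set $E$ of labeled examples uniquely characterizes $\phi$ with respect to $\mathrm{PL}_{\{\oplus_3\}}[\textsc{prop}]$ if $\phi$ fits all of $E$ and every formula of $\mathrm{PL}_{\{\oplus_3\}}[\textsc{prop}]$ fitting all of $E$ is equivalent to $\phi$. *)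

(* Defs.v *)
From mathcomp Require Import all_boot.
Set Implicit Arguments. Unset Strict Implicit. Unset Printing Implicit Defensive.

Inductive xor3_formula (P : Type) : Type :=
| XVar : P -> xor3_formula P
| XXor3 : xor3_formula P -> xor3_formula P -> xor3_formula P -> xor3_formula P.

Fixpoint xeval (P : finType) (V : {ffun P -> bool}) (phi : xor3_formula P) : bool :=
  match phi with
  | XVar x => V x
  | XXor3 a b c => (xeval V a (+) xeval V b (+) xeval V c)
  end.

Definition xequiv (P : finType) (phi psi : xor3_formula P) : Prop :=
  forall V : {ffun P -> bool}, xeval V phi = xeval V psi.

Definition example (P : finType) := ({ffun P -> bool} * bool)%type.

Definition fits (P : finType) (phi : xor3_formula P) (e : example P) : Prop :=
  xeval e.1 phi = e.2.

Definition fits_all (P : finType) (phi : xor3_formula P) (E : {set example P}) : Prop :=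
  forall e, e \in E -> fits phi e.

Definition uniquely_characterizes (P : finType) (E : {set example P})
    (phi : xor3_formula P) : Prop :=
  fits_all phi E /\ forall psi : xor3_formula P, fits_all psi E -> xequiv psi phi.

(* Main.v *)
Require Import Defs.
From mathcomp Require Import all_boot.
Lemma count_card (T : finType) (A : {set T}) (p : pred T) :
  count p (enum A) = #|A :&: [set x | p x]|.
Proof.
rewrite -size_filter -(card_uniqP (filter_uniq p (enum_uniq (mem A)))).
apply: eq_card => x; by rewrite mem_filter mem_enum !inE andbC.
Qed.
Lemma card_setP (T : finType) : #|{set T}| = 2 ^ #|T|.
Proof. by have := card_powerset [set: T]; rewrite powersetT !cardsT. Qed.
Lemma odd_symdiff (T : finType) (A B : {set T}) :
  odd #|(A :\: B) :|: (B :\: A)| = odd #|A| (+) odd #|B|.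
Proof.
have H : (A :\: B) :&: (B :\: A) = set0.
  by apply/setP => x; rewrite !inE; case: (x \in A); case: (x \in B).
rewrite cardsU H cards0 subn0 -(cardsID B A) -(cardsID A B) setIC.
by rewrite !oddD; case: (odd _); case: (odd _); case: (odd _).
Qed.
Lemma symdiffI (T : finType) (A B C : {set T}) :
  ((A :\: B) :|: (B :\: A)) :&: C = ((A :&: C) :\: (B :&: C)) :|: ((B :&: C) :\: (A :&: C)).
Proof.
by apply/setP => x; rewrite !inE; case: (x \in A); case: (x \in B); case: (x \in C).
Qed.
Fixpoint addp {P : Type} (phi : xor3_formula P) (s : seq P) : xor3_formula P :=
  match s with a :: b :: r => XXor3 (addp phi r) (XVar a) (XVar b) | _ => phi end.

Lemma addp_eval (P : finType) (V : {ffun P -> bool}) phi n (s : seq P) :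
  size s <= n -> ~~ odd (size s) ->
  xeval V (addp phi s) = xeval V phi (+) odd (count V s).
Proof.
elim: n s => [|n IH]; first by case=> //= _ _; rewrite addbF.
case=> [|a [|b r]] //=; first by rewrite addbF.
move=> Hs Ho; rewrite (IH r).
- by rewrite !oddD; case: (V a); case: (V b); case: (xeval V phi); case: (odd _).
- by apply: leq_trans (leqnSn _) _; exact: Hs.
- by move: Ho; rewrite /= negbK.
Qed.

Theorem theoremA3 (P : finType) (phi : xor3_formula P) (E : {set example P}) :
  uniquely_characterizes E phi -> #|P| - 1 <= #|E|.
Proof.
move=> [Hfit Huniq]; rewrite leqNgt; apply/negP => Hlt.
pose f (T : {set P}) : {ffun option {e : example P | e \in E} -> bool} :=
  [ffun o : option {e : example P | e \in E} => if o is Some e then odd #|T :&: [set x | (val e).1 x]| else odd #|T|].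
have Ninj : ~ injective f.
  move=> inj; have := leq_card f inj.
  rewrite card_setP card_ffun card_option card_bool card_sig leq_exp2l //.
  have -> : #|[pred x | x \in E]| = #|E| by apply: eq_card.
  rewrite leqNgt; move: Hlt; case: #|P| => //= m; rewrite subn1 /= => H.
  by rewrite ltnS H.
have : [exists T1, exists T2, (T1 != T2) && (f T1 == f T2)].
  apply: contraT => H; exfalso; apply: Ninj => T1 T2 Heq; apply/eqP; apply: contraT => Hne.
  case/negP: H; apply/existsP; exists T1; apply/existsP; exists T2.
  by rewrite Hne Heq eqxx.
case/existsP => T1 /existsP [T2 /andP [Hne /eqP Hf]].
set T := (T1 :\: T2) :|: (T2 :\: T1).
have HT : forall S, odd #|T :&: S| = odd #|T1 :&: S| (+) odd #|T2 :&: S|.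
  by move=> S; rewrite /T symdiffI odd_symdiff.
have Heven : ~~ odd #|T|.
  rewrite /T odd_symdiff; have /ffunP/(_ None) := Hf.
  by rewrite !ffunE => ->; rewrite addbb.
have He : forall e, e \in E -> ~~ odd #|T :&: [set x | e.1 x]|.
  move=> e He; have /ffunP/(_ (Some (exist _ e He))) := Hf.
  by rewrite !ffunE /= HT => ->; rewrite addbb.
have : T != set0.
  apply/negP => /eqP T0; apply: (negP Hne); apply/eqP/setP => x.
  have /setP/(_ x) := T0; rewrite /T !inE.
  by case: (x \in T1); case: (x \in T2).
case/set0Pn => a Ha.
pose psi := addp phi (enum T).
have Hsz : ~~ odd (size (enum T)) by rewrite -cardE.
have Hpsi : fits_all psi E.
  move=> e He'; rewrite /fits /psi (addp_eval _ _ _ _ _ (leqnn _) Hsz).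
  rewrite count_card (negbTE (He e He')) addbF; exact: Hfit.
have := Huniq psi Hpsi [ffun x => x == a].
rewrite /psi (addp_eval _ _ _ _ _ (leqnn _) Hsz) count_card.
have -> : T :&: [set x | [ffun x => x == a] x] = [set a].
  apply/setP => x; rewrite in_setI in_set1 inE ffunE; case: eqP => [->|_]; by rewrite ?Ha ?andbF.
by rewrite cards1 /=; case: (xeval _ phi).
Qed.
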